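(* Let $V$ be a commutative unital quantale whose underlying lattice is a frame. A $V$-homomorphism $f\colon(X,a,+)\to(Y,b,+)$ between $V$-groups is open if and only if it is proper.
   Context: A commutative unital quantale $V$ is a complete lattice with a commutative associative operation $\otimes$ with unit $k$ preserving arbitrary joins in each variable. A $V$-category $(X,a)$: $a\colon X\times X\to V$ with $k\le a(x,x)$ and $a(x,x')\otimes a(x',x'')\le a(x,x'')$. A $V$-group $(X,a,+)$ is a $V$-category with a group structure (additive, not necessarily abelian) such that $a(x_1,x_2)\otimes a(x_1',x_2')\le a(x_1+x_1',x_2+x_2')$; a $V$-homomorphism is a group homomorphism with $a(x,x')\le b(f(x),f(x'))$. A $V$-functor $f\colon(X,a)\to(Y,b)$ is proper if $b(f(x),y)=\bigvee\{a(x,x')\mid x'\in X,\ f(x')=y\}$ for all $x\in X$, $y\in Y$, and open if $b(y,f(x))=\bigvee\{a(x',x)\mid x'\in X,\ f(x')=y\}$ for all $x\in X$, $y\in Y$ (empty joins being $\bot$). *)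

(* Defs.v *)
Set Implicit Arguments.

(* A commutative unital quantale: a complete lattice (arbitrary joins qsup
   over subsets given as predicates) with a commutative associative tensor
   having unit qk and preserving arbitrary joins in each variable (by
   commutativity it suffices to require it in the second variable). *)
Record quantale := Quantale {
  qcar :> Type;
  qle : qcar -> qcar -> Prop;
  qle_refl : forall x, qle x x;
  qle_trans : forall x y z, qle x y -> qle y z -> qle x z;
  qle_antisym : forall x y, qle x y -> qle y x -> x = y;
  qsup : (qcar -> Prop) -> qcar;
  qsup_ub : forall (S : qcar -> Prop) x, S x -> qle x (qsup S);
  qsup_least : forall (S : qcar -> Prop) y,
      (forall x, S x -> qle x y) -> qle (qsup S) y;
  qtens : qcar -> qcar -> qcar;
  qk : qcar;
  qtens_assoc : forall x y z, qtens x (qtens y z) = qtens (qtens x y) z;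
  qtens_comm : forall x y, qtens x y = qtens y x;
  qtens_k : forall x, qtens qk x = x;
  qtens_sup : forall x (S : qcar -> Prop),
      qtens x (qsup S) = qsup (fun v => exists y, S y /\ v = qtens x y)
}.

Arguments qle {q} _ _.
Arguments qsup {q} _.
Arguments qtens {q} _ _.

Definition qmeet {V : quantale} (x y : V) : V :=
  qsup (fun z => qle z x /\ qle z y).

Definition is_frame (V : quantale) : Prop :=
  forall (x : V) (S : V -> Prop),
    qmeet x (qsup S) = qsup (fun v => exists y, S y /\ v = qmeet x y).

(* A V-group: a group (X, +, 0, -) (not necessarily abelian) with a
   V-category structure a compatible with + . *)
Record VGroup (V : quantale) := MkVGroup {
  gcar :> Type;
  gadd : gcar -> gcar -> gcar;
  gzero : gcar;
  gopp : gcar -> gcar;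
  gadd_assoc : forall x y z, gadd x (gadd y z) = gadd (gadd x y) z;
  gadd0 : forall x, gadd gzero x = x;
  gaddN : forall x, gadd (gopp x) x = gzero;
  gdist : gcar -> gcar -> V;
  gdist_refl : forall x, qle (qk V) (gdist x x);
  gdist_trans : forall x x' x'',
      qle (qtens (gdist x x') (gdist x' x'')) (gdist x x'');
  gdist_add : forall x1 x2 x1' x2',
      qle (qtens (gdist x1 x2) (gdist x1' x2'))
          (gdist (gadd x1 x1') (gadd x2 x2'))
}.

Arguments gadd {V v} _ _.
Arguments gdist {V v} _ _.

Definition VHom {V : quantale} {X Y : VGroup V} (f : X -> Y) : Prop :=
  (forall x y, f (gadd x y) = gadd (f x) (f y)) /\
  (forall x x', qle (gdist x x') (gdist (f x) (f x'))).

Definition proper {V : quantale} {X Y : VGroup V} (f : X -> Y) : Prop :=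
  forall (x : X) (y : Y),
    gdist (f x) y = qsup (fun v => exists x' : X, f x' = y /\ v = gdist x x').

Definition open {V : quantale} {X Y : VGroup V} (f : X -> Y) : Prop :=
  forall (x : X) (y : Y),
    gdist y (f x) = qsup (fun v => exists x' : X, f x' = y /\ v = gdist x' x).

(* Main.v *)
Require Import Defs.
From Stdlib Require Import Setoid.
Arguments gopp {V v} _.
Arguments gaddN {V v} _.
Arguments gadd0 {V v} _.
Arguments gadd_assoc {V v} _ _ _.
Arguments gdist_refl {V v} _.
Arguments gdist_add {V v} _ _ _ _.
Arguments qtens_k {q} _.

Section G.
Variable V : quantale.

Lemma sup_ext (S T : V -> Prop) : (forall v, S v <-> T v) -> qsup S = qsup T.
Proof.
  intros H. apply qle_antisym; apply qsup_least; intros x Hx;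
  apply qsup_ub; apply H; exact Hx.
Qed.

Lemma tens_mono_r (t x y : V) : qle x y -> qle (qtens t x) (qtens t y).
Proof.
  intros Hxy.
  assert (E : qsup (fun v => v = x \/ v = y) = y).
  { apply qle_antisym.
    - apply qsup_least. intros z [->| ->]; [exact Hxy | apply qle_refl].
    - apply qsup_ub. now right. }
  rewrite <- E. rewrite qtens_sup.
  apply qsup_ub. exists x. split; [now left | reflexivity].
Qed.

Lemma tens_mono_l (t x y : V) : qle x y -> qle (qtens x t) (qtens y t).
Proof. intros H. rewrite (qtens_comm _ x), (qtens_comm _ y). now apply tens_mono_r. Qed.

Variable X : VGroup V.

Lemma addr_inv (x : X) : gadd x (gopp x) = gzero X.
Proof.
  set (y := gadd x (gopp x)).
  assert (Hyy : gadd y y = y).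
  { unfold y. rewrite <- gadd_assoc. rewrite (gadd_assoc (gopp x) x).
    rewrite gaddN, gadd0. reflexivity. }
  assert (H1 : gadd (gopp y) (gadd y y) = y).
  { rewrite gadd_assoc, gaddN, gadd0. reflexivity. }
  rewrite Hyy, gaddN in H1. now symmetry.
Qed.

Lemma addr0 (x : X) : gadd x (gzero X) = x.
Proof. rewrite <- (gaddN x), gadd_assoc, addr_inv, gadd0. reflexivity. Qed.

Lemma oppK (x : X) : gopp (gopp x) = x.
Proof.
  rewrite <- (addr0 (gopp (gopp x))), <- (gaddN x), gadd_assoc, gaddN, gadd0.
  reflexivity.
Qed.

Lemma dist_left (z x x' : X) : qle (gdist x x') (gdist (gadd z x) (gadd z x')).
Proof.
  eapply qle_trans; [| apply gdist_add].
  rewrite <- (qtens_k (gdist x x')) at 1. apply tens_mono_l. apply gdist_refl.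
Qed.

Lemma dist_right (z x x' : X) : qle (gdist x x') (gdist (gadd x z) (gadd x' z)).
Proof.
  eapply qle_trans; [| apply gdist_add].
  rewrite <- (qtens_k (gdist x x')) at 1. rewrite qtens_comm.
  apply tens_mono_r. apply gdist_refl.
Qed.

Lemma dist_opp_le (x x' : X) : qle (gdist x x') (gdist (gopp x') (gopp x)).
Proof.
  eapply qle_trans; [apply (dist_left (gopp x')) |].
  rewrite gaddN.
  eapply qle_trans; [apply (dist_right (gopp x)) |].
  rewrite <- gadd_assoc, addr_inv, addr0, gadd0. apply qle_refl.
Qed.

Lemma dist_opp (x x' : X) : gdist x x' = gdist (gopp x') (gopp x).
Proof.
  apply qle_antisym; [apply dist_opp_le |].
  eapply qle_trans; [apply dist_opp_le |]. rewrite !oppK. apply qle_refl.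
Qed.
End G.
Arguments addr0 {V X} _.
Arguments addr_inv {V X} _.
Arguments oppK {V X} _.
Arguments dist_opp {V X} _ _.

Lemma hom_opp (V : quantale) (X Y : VGroup V) (f : X -> Y) :
  (forall x y, f (gadd x y) = gadd (f x) (f y)) -> forall x, f (gopp x) = gopp (f x).
Proof.
  intros Hh x.
  assert (H0 : f (gzero X) = gzero Y).
  { assert (E : gadd (f (gzero X)) (f (gzero X)) = f (gzero X)).
    { rewrite <- Hh, gadd0. reflexivity. }
    transitivity (gadd (gopp (f (gzero X))) (gadd (f (gzero X)) (f (gzero X)))).
    - rewrite gadd_assoc, gaddN, gadd0. reflexivity.
    - rewrite E, gaddN. reflexivity. }
  rewrite <- (addr0 (f (gopp x))), <- (addr_inv (f x)), gadd_assoc, <- Hh, gaddN, H0,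
    gadd0. reflexivity.
Qed.

Theorem proposition5p5 (V : quantale) (HV : is_frame V)
  (X Y : VGroup V) (f : X -> Y) (Hf : VHom f) :
  open f <-> proper f.
Proof.
  destruct Hf as [Hh _].
  split; intros H x y.
  - rewrite dist_opp, <- hom_opp by exact Hh. rewrite H.
    apply sup_ext. intros v; split.
    + intros [x'' [E ->]]. exists (gopp x''). split.
      * rewrite hom_opp, E, oppK by exact Hh. reflexivity.
      * rewrite (dist_opp x''), oppK. reflexivity.
    + intros [x' [E ->]]. exists (gopp x'). split.
      * rewrite hom_opp, E by exact Hh. reflexivity.
      * rewrite (dist_opp x). reflexivity.
  - rewrite dist_opp, <- hom_opp by exact Hh. rewrite H.
    apply sup_ext. intros v; split.
    + intros [x'' [E ->]]. exists (gopp x''). split.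
      * rewrite hom_opp, E, oppK by exact Hh. reflexivity.
      * rewrite (dist_opp (gopp x) x''), oppK. reflexivity.
    + intros [x' [E ->]]. exists (gopp x'). split.
      * rewrite hom_opp, E by exact Hh. reflexivity.
      * rewrite (dist_opp x'). reflexivity.
Qed.
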